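(* Let $M\ge2$, $\kappa>0$ and $0<p_1<p_2<\cdots<p_M$. For $i=1,\dots,M$ define $\eta_i(c)=c\log p_i-\log(1+\kappa p_i^{-1})$ for $c\in\mathbb R$, and for $i\neq j$ let $$c_{i,j}=\frac{\log(1+\kappa p_i^{-1})-\log(1+\kappa p_j^{-1})}{\log p_i-\log p_j},$$ so that $\eta_i(c_{i,j})=\eta_j(c_{i,j})$. For $i<j$ let $\sigma_{i,j}=|\{l:\ \eta_l(c_{i,j})<\eta_i(c_{i,j})=\eta_j(c_{i,j})\}|$ and $I(s)=\{(i,j):1\le i<j\le M,\ \sigma_{i,j}=s\}$. Then for every $0\le s\le M-2$, $$I(s)=\{(i,\,M-s+i-1):\ i=1,\dots,s+1\}.$$ *)

(* Defs.v *)
From HB Require Import structures.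
From mathcomp Require Import all_boot all_order all_algebra.
From mathcomp Require Import all_classical all_reals all_analysis.
Set Implicit Arguments. Unset Strict Implicit. Unset Printing Implicit Defensive.
Import Order.TTheory GRing.Theory Num.Theory.
Local Open Scope classical_set_scope.
Local Open Scope ring_scope.

(* indices are natural numbers 1..M (1-based, as in the paper) *)
Definition eta (R : realType) (kappa : R) (p : nat -> R) (i : nat) (c : R) : R :=
  c * ln (p i) - ln (1 + kappa * (p i)^-1).

Definition cij (R : realType) (kappa : R) (p : nat -> R) (i j : nat) : R :=
  (ln (1 + kappa * (p i)^-1) - ln (1 + kappa * (p j)^-1)) / (ln (p i) - ln (p j)).

Definition sigma (R : realType) (M : nat) (kappa : R) (p : nat -> R) (i j : nat) : nat :=
  count (fun l => eta kappa p l (cij kappa p i j) < eta kappa p i (cij kappa p i j))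
        (iota 1 M).

Definition Iset (R : realType) (M : nat) (kappa : R) (p : nat -> R) (s : nat)
  : set (nat * nat) :=
  [set ij | [/\ (1 <= ij.1)%N, (ij.1 < ij.2)%N, (ij.2 <= M)%N
             & sigma M kappa p ij.1 ij.2 = s]].

(* Main.v *)
Require Import Defs.
From HB Require Import structures.
From mathcomp Require Import all_boot all_order all_algebra.
From mathcomp Require Import all_classical all_reals all_analysis.
From mathcomp Require Import lra zify.
Import Order.TTheory GRing.Theory Num.Theory.
Local Open Scope classical_set_scope.
Local Open Scope ring_scope.

Definition Gf {R : realType} (k : R) (y : R) := ln (expR y + k).

Lemma Gder (R : realType) (k : R) (k0 : 0 < k) (x : R) :
  is_derive x 1 (Gf k) ((expR x + k)^-1 * expR x).
Proof.
have h1 : is_derive x 1 (fun y => expR y + k) (expR x).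
  have := @is_deriveD R R R (@expR R) (cst k) x 1 (expR x) 0 _ _.
  by rewrite addr0; apply.
have h2 : is_derive (expR x + k) 1 (@ln R) ((expR x + k)^-1).
  apply: is_derive1_ln; by rewrite addr_gt0 // expR_gt0.
have h3 := @is_derive1_comp R (@ln R) (fun y => expR y + k) x _ _ h2 h1.
exact: h3.
Qed.

Arguments Gder {R k}.

Lemma Gmono (R : realType) (k : R) (k0 : 0 < k) (u v : R) : u < v ->
  (expR u + k)^-1 * expR u < (expR v + k)^-1 * expR v.
Proof.
move=> uv.
have e1 := expR_gt0 u; have e2 := expR_gt0 v.
have e12 : expR u < expR v by rewrite ltr_expR.
rewrite ![_^-1 * _]mulrC ltr_pdivrMr ?addr_gt0 // mulrAC ltr_pdivlMr ?addr_gt0 //.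
have h : expR u * k < expR v * k by rewrite ltr_pM2r.
rewrite !mulrDr [expR v * expR u]mulrC; lra.
Qed.

Lemma Gconv (R : realType) (k : R) (k0 : 0 < k) (a b c : R) : a < b -> b < c ->
  (Gf k b - Gf k a) * (c - b) < (Gf k c - Gf k b) * (b - a).
Proof.
move=> ab bc.
case: (MVT ab (fun x _ => Gder k0 x)) => [|x1 x1i ->].
  by apply: derivable_within_continuous => x _; case: (Gder k0 x).
case: (MVT bc (fun x _ => Gder k0 x)) => [|x2 x2i ->].
  by apply: derivable_within_continuous => x _; case: (Gder k0 x).
have x12 : x1 < x2.
  move: x1i x2i; rewrite !in_itv /= => /andP[_ h1] /andP[h2 _].
  exact: lt_trans h1 h2.
have := @Gmono R k k0 x1 x2 x12.
set g1 := _ * expR x1; set g2 := _ * expR x2.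
move=> h.
have ba : 0 < b - a by rewrite subr_gt0.
have cb : 0 < c - b by rewrite subr_gt0.
have : 0 < (b - a) * (c - b) by rewrite mulr_gt0.
nra.
Qed.

Arguments Gconv {R k}.

Lemma case1 (R : realType) (xa xb xc La Lb Lc c : R) : xa < xb -> xb < xc ->
  (Lb - La) * (xc - xb) < (Lc - Lb) * (xb - xa) ->
  c * (xb - xc) = Lb - Lc -> c * xa - La < c * xb - Lb.
Proof. move=> h1 h2 h3 h4; nra. Qed.

Lemma case2 (R : realType) (xa xb xc La Lb Lc c : R) : xa < xb -> xb < xc ->
  (Lb - La) * (xc - xb) < (Lc - Lb) * (xb - xa) ->
  c * (xa - xc) = La - Lc -> c * xa - La < c * xb - Lb.
Proof. move=> h1 h2 h3 h4; nra. Qed.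

Lemma case3 (R : realType) (xa xb xc La Lb Lc c : R) : xa < xb -> xb < xc ->
  (Lb - La) * (xc - xb) < (Lc - Lb) * (xb - xa) ->
  c * (xa - xb) = La - Lb -> c * xc - Lc < c * xa - La.
Proof. move=> h1 h2 h3 h4; nra. Qed.

Arguments case1 {R xa xb xc La Lb Lc c}.
Arguments case2 {R xa xb xc La Lb Lc c}.
Arguments case3 {R xa xb xc La Lb Lc c}.

Lemma incr (R : realType) (M : nat) (p : nat -> R) :
  (forall i : nat, (1 <= i)%N -> (i < M)%N -> p i < p i.+1) ->
  forall a b, (1 <= a)%N -> (a < b)%N -> (b <= M)%N -> p a < p b.
Proof.
move=> h a b ha; elim: b => // b IH.
rewrite ltnS leq_eqVlt => /orP[/eqP<-|ab] hbM.
  by apply: h => //; lia.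
apply: lt_trans (IH ab _) (h b _ _); lia.
Qed.

Arguments incr {R M p}.

Lemma count_split (M i j : nat) : (1 <= i)%N -> (i < j)%N -> (j <= M)%N ->
  count (fun l => (l < i)%N || (j < l)%N) (iota 1 M) = ((i - 1) + (M - j))%N.
Proof.
move=> h1 h2 h3.
have -> : iota 1 M = iota 1 (i - 1) ++ iota i (j - i + 1) ++ iota (j + 1) (M - j).
  have e : M = (i - 1 + (j - i + 1 + (M - j)))%N by lia.
  rewrite {1}e (iotaD 1) (iotaD (1 + (i - 1))).
  have -> : (1 + (i - 1) = i)%N by lia.
  by have -> : (i + (j - i + 1) = j + 1)%N by lia.
rewrite !count_cat.
rewrite (@eq_in_count _ _ predT (iota 1 (i - 1))); last first.
  by move=> l; rewrite mem_iota => /andP[? ?]; apply/orP; left; lia.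
rewrite (@eq_in_count _ _ pred0 (iota i (j - i + 1))); last first.
  move=> l; rewrite mem_iota => /andP[? ?] /=; apply/negbTE/negP => /orP[]; lia.
rewrite (@eq_in_count _ _ predT (iota (j + 1) (M - j))); last first.
  by move=> l; rewrite mem_iota => /andP[? ?]; apply/orP; right; lia.
by rewrite !count_predT count_pred0 !size_iota add0n.
Qed.

Lemma sigma_val (R : realType) (M : nat) (k : R) (p : nat -> R) :
  0 < k -> 0 < p 1%N ->
  (forall i : nat, (1 <= i)%N -> (i < M)%N -> p i < p i.+1) ->
  forall i j, (1 <= i)%N -> (i < j)%N -> (j <= M)%N ->
  sigma M k p i j = ((i - 1) + (M - j))%N.
Proof.
move=> k0 p1 hinc i j hi hij hjM.
have pos l : (1 <= l)%N -> (l <= M)%N -> 0 < p l.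
  move=> l1 lM; have [->|l1'] : (l = 1 \/ 1 < l)%N by lia.
    by [].
  exact: lt_trans p1 (incr hinc 1%N l (leqnn 1) l1' lM).
have xinc a b : (1 <= a)%N -> (a < b)%N -> (b <= M)%N -> ln (p a) < ln (p b).
  move=> ha ab bM; rewrite ltr_ln ?posrE ?pos //; [exact: incr hinc a b ha ab bM| |]; lia.
have hL l : (1 <= l)%N -> (l <= M)%N ->
    ln (1 + k * (p l)^-1) = Gf k (ln (p l)) - ln (p l).
  move=> l1 lM; have pl := pos l l1 lM.
  rewrite /Gf lnK ?posrE //.
  have -> : 1 + k * (p l)^-1 = (p l + k) * (p l)^-1.
    by rewrite mulrDl divff ?gt_eqF.
  rewrite lnM ?posrE ?invr_gt0 ?addr_gt0 // lnV ?posrE //.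
have conv a b c : (1 <= a)%N -> (a < b)%N -> (b < c)%N -> (c <= M)%N ->
    (ln (1 + k * (p b)^-1) - ln (1 + k * (p a)^-1)) * (ln (p c) - ln (p b)) <
    (ln (1 + k * (p c)^-1) - ln (1 + k * (p b)^-1)) * (ln (p b) - ln (p a)).
  move=> ha ab bc cM.
  rewrite !hL; try lia.
  have h1 := xinc a b ha ab ltac:(lia).
  have h2 := xinc b c ltac:(lia) bc cM.
  have := Gconv k0 _ _ _ h1 h2.
  nra.
set c := cij k p i j.
have hc : c * (ln (p i) - ln (p j)) = ln (1 + k * (p i)^-1) - ln (1 + k * (p j)^-1).
  by rewrite /c /cij divfK // subr_eq0 lt_eqF // xinc.
rewrite /sigma -count_split //; apply: eq_in_count => l; rewrite mem_iota => /andP[l1 l2].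
have lM : (l <= M)%N by lia.
rewrite /Defs.eta -/c /=.
case: (ltngtP l i) => [li|il|->].
- apply: (case1 (xinc l i l1 li _) (xinc i j hi hij hjM) (conv l i j l1 li hij hjM) hc); lia.
- case: (ltngtP l j) => [lj|jl|->] /=.
  + apply/negbTE; rewrite -leNgt; apply: ltW.
    apply: (case2 (xinc i l hi il _) (xinc l j _ lj hjM) (conv i l j hi il lj hjM) hc); lia.
  + apply: (case3 (xinc i j hi hij _) (xinc j l _ jl lM) (conv i j l hi hij jl lM) hc); lia.
  + apply/negbTE; rewrite -leNgt le_eqVlt; apply/orP; left; apply/eqP.
    lra.
- rewrite ltxx /=; apply/esym/negbTE; rewrite -leqNgt; lia.
Qed.

Theorem lemma4 (R : realType) (M : nat) (kappa : R) (p : nat -> R) :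
  (2 <= M)%N -> 0 < kappa -> 0 < p 1%N ->
  (forall i : nat, (1 <= i)%N -> (i < M)%N -> p i < p i.+1) ->
  forall s : nat, (s <= M - 2)%N ->
  Iset M kappa p s =
  [set ij : nat * nat | exists2 i : nat, (1 <= i <= s.+1)%N & ij = (i, M - s + i - 1)%N].
Proof.
move=> hM k0 p1 hinc s hs.
rewrite /Iset; apply/seteqP; split => -[i j] /=.
- move=> [h1 h2 h3]; rewrite (@sigma_val _ M _ p k0 p1 hinc _ _ h1 h2 h3) => hsig.
  exists i; first by apply/andP; split; lia.
  congr pair; lia.
- move=> [i0 /andP[h1 h2] [-> ->]].
  have a1 : (i0 < M - s + i0 - 1)%N by lia.
  have a2 : (M - s + i0 - 1 <= M)%N by lia.
  split => //; rewrite (@sigma_val _ M _ p k0 p1 hinc _ _ h1 a1 a2); lia.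
Qed.
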